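(* For any $\varepsilon>0$ (and any $\gamma>1$) there exist instances with outcomes satisfying UPRF such that: one such outcome is not $\left(\frac{3+\sqrt{17}}{2}-\varepsilon\right)$-proportionally fair; one such outcome does not satisfy $(3-\varepsilon)$-individual fairness; and one such outcome is not in the $\left(\gamma,\frac{\gamma+1}{\gamma-1}-\varepsilon\right)$-transferable core.
   Context: Let $(\mathcal X,d)$ be a metric space, $N=[n]$ a set of agents and $C$ a set of candidates located in $\mathcal X$, $k\in\mathbb N^+$; an outcome is $W\subseteq C$ with $|W|\le k$; $B(i,r)=\{x\in\mathcal X:d(i,x)\le r\}$; $d(i,W)=\min_{c\in W}d(i,c)$. UPRF: there are no $\ell\in\mathbb N$, no $N'\subseteq N$ with $|N'|\ge\ell n/k$, and no $y\in\mathbb R$ with $\max_{i,i'\in N'}d(i,i')\le y$ and $|\bigcup_{i\in N'}B(i,y)\cap W|<\ell$. $\alpha$-proportional fairness: there is no $N'\subseteq N$ with $|N'|\ge n/k$ and $c\in C\setminus W$ with $\alpha\,d(i,c)<d(i,W)$ for all $i\in N'$. $\beta$-individual fairness: $d(i,W)\le\beta\,r(i)$ for all $i\in N$, where $r(i)=\min\{r: |B(i,r)\cap N|\ge n/k\}$. $(\gamma,\alpha)$-transferable core: there is no $N'\subseteq N$ and $c\in C\setminus W$ with $|N'|\ge\gamma n/k$ and $\alpha\sum_{i\in N'}d(i,c)<\sum_{i\in N'}d(i,W)$. *)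

(* Defs.v *)
From mathcomp Require Import all_boot all_order all_algebra.
From mathcomp Require Import reals.
Set Implicit Arguments. Unset Strict Implicit. Unset Printing Implicit Defensive.
Import Order.TTheory GRing.Theory Num.Theory.
Local Open Scope ring_scope.

Section Defs.
Variables (R : realType) (X : Type) (d : X -> X -> R).

Definition is_metric : Prop :=
  [/\ forall x y, 0 <= d x y,
      forall x y, d x y = 0 <-> x = y,
      forall x y, d x y = d y x &
      forall x y z, d x z <= d x y + d y z].

Variables (n m : nat) (a : 'I_n -> X) (cl : 'I_m -> X).
(* agents are 'I_n located at a i; candidates are 'I_m located at cl c. *)

Definition outcome (k : nat) (W : {set 'I_m}) : Prop := (#|W| <= k)%N.

(* d(x, W) = min_{c in W} d(x, c)  (convention: 0 if W is empty) *)
Definition distW (x : X) (W : {set 'I_m}) : R :=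
  match [pick c in W] with
  | Some c0 => d x (cl (Order.arg_min c0 (fun c => c \in W) (fun c => d x (cl c))))
  | None => 0
  end.

Definition UPRF (k : nat) (W : {set 'I_m}) : Prop :=
  ~ exists (l : nat) (N' : {set 'I_n}) (y : R),
      [/\ (l%:R * n%:R / k%:R <= #|N'|%:R :> R),
          (forall i i', i \in N' -> i' \in N' -> d (a i) (a i') <= y) &
          (#|[set c in W | [exists i in N', (d (a i) (cl c) <= y)%R]]| < l)%N].

Definition prop_fair (k : nat) (alpha : R) (W : {set 'I_m}) : Prop :=
  ~ exists (N' : {set 'I_n}) (c : 'I_m),
      [/\ n%:R / k%:R <= #|N'|%:R :> R, c \notin W &
          forall i, i \in N' -> alpha * d (a i) (cl c) < distW (a i) W].

Definition ball_ok (k : nat) (i : 'I_n) (r : R) : Prop :=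
  n%:R / k%:R <= #|[set j : 'I_n | (d (a i) (a j) <= r)%R]|%:R :> R.

Definition is_rad (k : nat) (i : 'I_n) (r : R) : Prop :=
  ball_ok k i r /\ forall r', ball_ok k i r' -> r <= r'.

Definition indiv_fair (k : nat) (beta : R) (W : {set 'I_m}) : Prop :=
  forall i r, is_rad k i r -> distW (a i) W <= beta * r.

Definition trans_core (k : nat) (gamma alpha : R) (W : {set 'I_m}) : Prop :=
  ~ exists (N' : {set 'I_n}) (c : 'I_m),
      [/\ c \notin W, gamma * n%:R / k%:R <= #|N'|%:R &
          alpha * (\sum_(i in N') d (a i) (cl c)) < \sum_(i in N') distW (a i) W].

End Defs.

(* Main.v *)
Require Import Defs.
From mathcomp Require Import all_boot all_order all_algebra.
From mathcomp Require Import reals.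
From mathcomp Require Import ring lra zify.
Import Order.TTheory GRing.Theory Num.Theory.
Local Open Scope ring_scope.

Lemma distW_const (R : realType) (X : Type) (d : X -> X -> R) m (cl : 'I_m -> X)
  (W : {set 'I_m}) (p x : X) :
  (exists c, c \in W) -> (forall c, c \in W -> cl c = p) -> distW d cl x W = d x p.
Proof.
move=> [c Hc] Hp; rewrite /distW; case: pickP => [c0 Hc0|H]; last by rewrite H in Hc.
by case: arg_minP => // j Hj _; rewrite Hp.
Qed.

Definition dL1 (R : realType) (p q : R * R) : R := `|p.1 - q.1| + `|p.2 - q.2|.

Lemma dL1_metric (R : realType) : is_metric (@dL1 R).
Proof.
rewrite /dL1; split.
- by move=> x y; rewrite addr_ge0.
- move=> [x1 x2] [y1 y2] /=; split; last by case=> -> ->; rewrite !subrr normr0 addr0.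
  move/eqP; rewrite paddr_eq0 // !normr_eq0 !subr_eq0 => /andP[/eqP -> /eqP ->] //.
- by move=> x y; rewrite (distrC x.1) (distrC x.2).
- by move=> x y z; rewrite addrACA; apply: lerD; apply: ler_distD.
Qed.

Lemma UPRF_k1 (R : realType) (X : Type) (d : X -> X -> R) n m (a : 'I_n -> X)
  (cl : 'I_m -> X) (W : {set 'I_m}) : (0 < n)%N ->
  (forall y, (forall i i', d (a i) (a i') <= y) -> exists2 c, c \in W & exists i, d (a i) (cl c) <= y) ->
  UPRF d a cl 1 W.
Proof.
move=> n0 H [l [N' [y [Hl Hy Hc]]]].
have Hl' : (l * n <= #|N'|)%N by move: Hl; rewrite divr1 -natrM ler_nat.
have l1 : (l <= 1)%N.
  have := max_card N'; rewrite card_ord => Hn.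
  by have := leq_trans Hl' Hn; rewrite -{2}(mul1n n) leq_pmul2r.
case: l Hl Hl' Hc l1 => [|[|//]] Hl Hl'; first by [].
have HN : N' = setT.
  by apply/eqP; rewrite eqEcard subsetT cardsT card_ord -{1}(mul1n n).
rewrite HN in Hy *.
have [c Hc [i Hi]] := H y (fun i i' => Hy i i' (in_setT _) (in_setT _)).
rewrite ltnS leqn0 cards_eq0 => /eqP/setP/(_ c).
rewrite !inE Hc /= => E.
have : [exists i0 in [set: 'I_n], d (a i0) (cl c) <= y].
  by apply/existsP; exists i; rewrite in_setT Hi.
by rewrite E.
Qed.

Lemma normP (R : realType) (x y : R) : (x = y \/ x = -y) -> 0 <= y -> `|x| = y.
Proof. by move=> [->|->] h; rewrite ?normrN ger0_norm. Qed.

Lemma normP0 (R : realType) (x : R) : 0 <= x -> `|x| = x.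
Proof. by move=> h; rewrite ger0_norm. Qed.

Lemma normP' (R : realType) (x : R) : x <= 0 -> `|x| = - x.
Proof. by move=> h; rewrite ler0_norm. Qed.

Ltac nrm1 := match goal with |- context[`|?t|] =>
  first [ rewrite (@normP0 _ t); last by lra
        | rewrite (@normP' _ t); last by lra ] end.
Ltac nrms := repeat nrm1.

Lemma sqrt17 (R : realType) : let s := Num.sqrt (17 : R) in s * s = 17 /\ 3 < s.
Proof.
move=> s.
have h : s * s = 17 by rewrite -expr2 sqr_sqrtr.
have h0 : 0 <= s by apply: sqrtr_ge0.
split=> //; nra.
Qed.

Lemma part1 (R : realType) (eps : R) : 0 < eps ->
  exists (X : Type) (d : X -> X -> R) (n m k : nat)
             (a : 'I_n -> X) (cl : 'I_m -> X) (W : {set 'I_m}),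
          [/\ is_metric d, (0 < n)%N /\ (0 < k)%N, outcome k W,
              UPRF d a cl k W &
              ~ prop_fair d a cl k ((3 + Num.sqrt 17) / 2 - eps) W].
Proof.
move=> e0.
have [hs hs3] := sqrt17 R.
set s := Num.sqrt 17 in hs hs3 *.
pose a : 'I_3 -> R * R := fun i => match val i with 0 => (-2, 0) | 1 => (2, 0) | _ => (0, s - 3) end.
pose cl : 'I_2 -> R * R := fun c => if val c == 0%N then (0, s + 1) else (0, 0).
have Hcl : forall c, c \in [set ord0] -> cl c = (0, s + 1) by move=> c; rewrite inE => /eqP ->.
exists (R * R)%type, (@dL1 R), 3%N, 2%N, 1%N, a, cl, [set ord0]; split => //.
- exact: dL1_metric.
- by rewrite /outcome cards1.
- apply: UPRF_k1 => // y Hy; exists ord0; first by rewrite inE.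
  exists (Ordinal (isT : (2 < 3)%N)).
  have := Hy (Ordinal (isT : (0 < 3)%N)) (Ordinal (isT : (1 < 3)%N)).
  rewrite /dL1 /=.
  nrms => H1.
  lra.
- apply; exists setT, (Ordinal (isT : (1 < 2)%N)); split.
  + by rewrite cardsT card_ord divr1.
  + by rewrite inE.
  move=> i _; rewrite (distW_const _ _ _ _ _ _ _ _ _ Hcl); last by exists ord0; rewrite inE.
  case: i => [[|[|[|//]]] Hi]; rewrite /dL1 /a /cl /=.
  + nrms; rewrite ?subr0 ?sub0r ?opprK ?subrr; nrms; lra.
  + nrms; rewrite ?subr0 ?sub0r ?opprK ?subrr; lra.
  + nrms; rewrite ?subr0 ?sub0r ?opprK ?subrr; nrms.
    have : 0 < eps * (s - 3) by apply: mulr_gt0; lra.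
    nra.
Qed.

Lemma part2 (R : realType) (eps : R) : 0 < eps ->
      (exists (X : Type) (d : X -> X -> R) (n m k : nat)
             (a : 'I_n -> X) (cl : 'I_m -> X) (W : {set 'I_m}),
          [/\ is_metric d, (0 < n)%N /\ (0 < k)%N, outcome k W,
              UPRF d a cl k W &
              ~ indiv_fair d a cl k (3 - eps) W]).
Proof.
move=> e0.
pose a : 'I_3 -> R * R := fun i => match val i with 0 => (0, 0) | 1 => (-1, 0) | _ => (1, 0) end.
pose cl : 'I_1 -> R * R := fun c => (3, 0).
have Hcl : forall c, c \in [set: 'I_1] -> cl c = (3, 0) by [].
exists (R * R)%type, (@dL1 R), 3%N, 1%N, 1%N, a, cl, setT; split => //.
- exact: dL1_metric.
- by rewrite /outcome cardsT card_ord.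
- apply: UPRF_k1 => // y Hy; exists ord0; first by rewrite inE.
  exists (Ordinal (isT : (2 < 3)%N)).
  have := Hy (Ordinal (isT : (1 < 3)%N)) (Ordinal (isT : (2 < 3)%N)).
  rewrite /dL1 /=.
  nrms; rewrite ?subr0 ?sub0r ?opprK ?subrr; nrms => H1.
  lra.
- move=> /(_ ord0 1).
  rewrite (distW_const _ _ _ _ _ _ _ _ _ Hcl); last by exists ord0.
  have Hr : is_rad (@dL1 R) a 1 ord0 1.
    split.
    + rewrite /ball_ok divr1 ler_nat -{1}(card_ord 3) -cardsT.
      apply/subset_leq_card/subsetP => j _; rewrite inE.
      case: j => [[|[|[|//]]] Hj]; rewrite /dL1 /a /=;
        nrms; rewrite ?subr0 ?sub0r ?opprK ?subrr; nrms; lra.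
    + move=> r' Hb; rewrite leNgt; apply/negP => Hr.
      move: Hb; rewrite /ball_ok divr1; apply/negP; rewrite -ltNge.
      have : [set j | @dL1 R (a ord0) (a j) <= r'] \subset [set ord0].
        apply/subsetP => j; rewrite !inE.
        case: j => [[|[|[|//]]] Hj]; rewrite /dL1 /a /=; first by [].
        * nrms; rewrite ?subr0 ?sub0r ?opprK ?subrr; nrms => H; exfalso; lra.
        * nrms; rewrite ?subr0 ?sub0r ?opprK ?subrr; nrms => H; exfalso; lra.
      move/subset_leq_card; rewrite cards1 => H.
      by rewrite ltr_nat (leq_ltn_trans H).
  move/(_ Hr); rewrite /dL1 /=; nrms; rewrite ?subr0 ?sub0r ?opprK ?subrr; nrms.
  lra.
Qed.

Definition dmet (R : realType) (x y : nat) : R :=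
  if x == y then 0 else if (x <= 1)%N == (y <= 1)%N then 2 else 1.

Lemma dmet_ge1 (R : realType) x y : x <> y -> 1 <= @dmet R x y.
Proof. by rewrite /dmet; case: (x =P y) => // _ _; case: ifP => _; lra. Qed.

Lemma dmet_le2 (R : realType) x y : @dmet R x y <= 2.
Proof. by rewrite /dmet; repeat (case: ifP => _); lra. Qed.

Lemma dmet_ge0 (R : realType) x y : 0 <= @dmet R x y.
Proof. by rewrite /dmet; repeat (case: ifP => _); lra. Qed.

Lemma dmet_xx (R : realType) x : @dmet R x x = 0.
Proof. by rewrite /dmet eqxx. Qed.

Lemma dmet_metric (R : realType) : is_metric (@dmet R).
Proof.
split.
- exact: dmet_ge0.
- move=> x y; split; last by move=> ->; rewrite dmet_xx.
  case: (x =P y) => // /(dmet_ge1 R) h h1; by rewrite h1 ler10 in h.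
- by move=> x y; rewrite /dmet eq_sym [((y <= 1)%N == _)]eq_sym.
- move=> x y z.
  have h1 := dmet_ge0 R x y; have h2 := dmet_ge0 R y z; have h3 := dmet_le2 R x z.
  case: (x =P z) => [->|_]; first by rewrite dmet_xx; apply: addr_ge0; apply: dmet_ge0.
  case: (x =P y) => [->|/(dmet_ge1 R) h4]; first by rewrite dmet_xx add0r.
  case: (y =P z) => [->|/(dmet_ge1 R) h5]; first by rewrite dmet_xx addr0.
  lra.
Qed.

Lemma card_lt n M (h : (M <= n)%N) : #|[set i : 'I_n | (i < M)%N]| = M.
Proof.
have -> : [set i : 'I_n | (i < M)%N] = widen_ord h @: setT.
  apply/setP => i; rewrite inE; apply/idP/imsetP => [Hi | [j _ ->]].
    by exists (Ordinal Hi) => //; apply/val_inj.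
  by rewrite /= ltn_ord.
by rewrite card_imset ?cardsT ?card_ord //; by move=> i j /(congr1 val) /= /val_inj.
Qed.

Lemma sum_lt (R : realType) n M P (h : (M <= n)%N) (hP : (P <= M)%N) (u v : R) (F : 'I_n -> R) :
  (forall i : 'I_n, F i = if (i < P)%N then u else v) ->
  \sum_(i in [set i : 'I_n | (i < M)%N]) F i = u *+ P + v *+ (M - P).
Proof.
move=> HF.
rewrite (eq_bigl (fun i : 'I_n => true && (i < M)%N)); last by move=> i; rewrite inE.
rewrite (big_ord_narrow_cond h) /=.
rewrite (eq_bigr (fun i : 'I_M => if (i < P)%N then u else v)); last by move=> i _; rewrite HF.
rewrite -(big_mkord xpredT (fun i => if (i < P)%N then u else v)).
rewrite (big_cat_nat (n := P)) ?leq0n ?hP //=.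
rewrite (eq_big_nat _ _ (F2 := fun=> u)); last by move=> i /andP[_ ->].
rewrite (eq_big_nat _ _ (F1 := fun i => if (i < P)%N then u else v) (F2 := fun=> v)); last first.
  by move=> i /andP[Hi _]; rewrite ltnNge Hi.
by rewrite !sumr_const_nat subn0.
Qed.

Lemma final_ineq (R : realType) (eps gamma p Q : R) : 0 < eps -> 1 < gamma -> 1 <= p ->
  gamma * (p + 1) - p < Q -> Q <= gamma * (p + 1) - p + 1 ->
  2 * (gamma + 1) / (eps * (gamma - 1) ^+ 2) < p ->
  ((gamma + 1) / (gamma - 1) - eps) * Q < 2 * p + Q.
Proof.
move=> e0 g1 p1 hq1 hq2 hZ.
have g0 : 0 < gamma - 1 by lra.
have h1 : 2 * (gamma + 1) < p * (eps * (gamma - 1) ^+ 2).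
  by rewrite -ltr_pdivrMr // mulr_gt0 // exprn_gt0.
have key : (2 - eps * (gamma - 1)) * Q < 2 * p * (gamma - 1).
  have Q0 : 0 <= Q by nra.
  case: (lerP (2 - eps * (gamma - 1)) 0) => hs.
    have : (2 - eps * (gamma - 1)) * Q <= 0 by apply: mulr_le0_ge0.
    have : 0 < 2 * p * (gamma - 1) by apply: mulr_gt0 => //; lra.
    lra.
  have : (2 - eps * (gamma - 1)) * Q <= (2 - eps * (gamma - 1)) * (gamma * (p + 1) - p + 1).
    by rewrite ler_pM2l.
  have t1 : 0 < eps * (gamma - 1) * (gamma + 1) by rewrite mulr_gt0 ?mulr_gt0 //; lra.
  move: h1; rewrite expr2 => h1.
  nra.
have E : ((gamma + 1) / (gamma - 1) - eps) * Q = Q + (2 - eps * (gamma - 1)) * Q / (gamma - 1).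
  by field; rewrite subr_eq0; apply/eqP => h; move: g1; rewrite h ltxx.
rewrite E.
have : (2 - eps * (gamma - 1)) * Q / (gamma - 1) < 2 * p by rewrite ltr_pdivrMr.
lra.
Qed.

Lemma part3 (R : realType) (eps gamma : R) : 0 < eps -> 1 < gamma ->
      (exists (X : Type) (d : X -> X -> R) (n m k : nat)
             (a : 'I_n -> X) (cl : 'I_m -> X) (W : {set 'I_m}),
          [/\ is_metric d, (0 < n)%N /\ (0 < k)%N, outcome k W,
              UPRF d a cl k W &
              ~ trans_core d a cl k gamma ((gamma + 1) / (gamma - 1) - eps) W]).
Proof.
move=> e0 g1.
pose K := (Num.truncn gamma).+2.
have hK : gamma + 1 <= K%:R.
  have := truncnS_gt gamma; rewrite /K -addn1 natrD; lra.
pose Z := 2 * (gamma + 1) / (eps * (gamma - 1) ^+ 2).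
pose P := (Num.truncn Z).+1.
have hP : Z < P%:R by apply: truncnS_gt.
have P1 : 1 <= P%:R :> R by rewrite ler1n.
pose x := gamma * (P%:R + 1) - P%:R.
have x0 : 0 <= x by rewrite /x; nra.
pose q := (Num.truncn x).+1.
have hq1 : x < q%:R by apply: truncnS_gt.
have hq2 : q%:R <= x + 1 by rewrite /q -addn1 natrD lerD2r truncn_le.
pose n := (K * P.+1)%N.
have hPq : (P + q <= n)%N.
  rewrite -(ler_nat R) natrD /n natrM.
  have : gamma * (P%:R + 1) + 1 <= (gamma + 1) * (P%:R + 1) by nra.
  have : (gamma + 1) * (P%:R + 1) <= K%:R * (P%:R + 1) by rewrite ler_pM2r //; lra.
  rewrite -addn1 natrD; move: hq2; rewrite /x; lra.
have nk : n%:R / K%:R = (P.+1)%:R :> R.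
  by rewrite /n natrM mulrC mulrA mulVf ?mul1r // pnatr_eq0.
pose a : 'I_n -> nat := fun i => if (i < P)%N then 0%N else (i + 2)%N.
pose cl : 'I_K.+1 -> nat := fun c => if c == ord0 then 0%N else 1%N.
have Hcl : forall c, c \in [set~ ord0] -> cl c = 1%N.
  by move=> c; rewrite !inE /cl => /negbTE ->.
have HW : exists c, c \in [set~ (ord0 : 'I_K.+1)].
  by exists (@Ordinal K.+1 1 isT); rewrite !inE.
exists nat, (@dmet R), n, K.+1, K, a, cl, [set~ ord0]; split.
- exact: dmet_metric.
- by split; rewrite /n ?muln_gt0.
- by rewrite /outcome cardsC1 card_ord.
- move=> [l [N' [y [Hl Hy Hc]]]].
  move: Hl; rewrite -mulrA nk -natrM ler_nat => Hl.
  have l0 : (0 < l)%N by case: (l) Hc.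
  have hcardN : (P.+1 <= #|N'|)%N by apply: leq_trans Hl; rewrite leq_pmull.
  have [i0 Hi0 Hi0P] : exists2 i0, i0 \in N' & ~~ (i0 < P)%N.
    case: (boolP [exists i in N', ~~ (i < P)%N]) => [/exists_inP [i ? ?]|H]; first by exists i.
    have : N' \subset [set i : 'I_n | (i < P)%N].
      apply/subsetP => i Hi; rewrite inE; apply/negPn/negP => h; move/negP: H; apply.
      by apply/exists_inP; exists i.
    move/subset_leq_card; rewrite card_lt; last by rewrite /n; nia.
    by move=> h; move: (leq_trans hcardN h); rewrite ltnn.
  have [j Hj Hji] : exists2 j, j \in N' & j != i0.
    have : (0 < #|N' :\ i0|)%N.
      move: hcardN; rewrite (cardsD1 i0 N') Hi0 add1n ltnS; rewrite /P; lia.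
    by case/card_gt0P => j; rewrite !inE => /andP[? ?]; exists j.
  have y1 : 1 <= y.
    apply: le_trans (Hy _ _ Hi0 Hj); apply: dmet_ge1.
    rewrite /a (negbTE Hi0P); case: ifP => _ E; first by lia.
    have E2 : (i0 : nat) = j by lia.
    by move: Hji; rewrite (val_inj E2) eqxx.
  have hK2 : (K <= #|[set c in [set~ ord0] | [exists i in N', (dmet R (a i) (cl c) <= y)%R]]|)%N.
    have cW : #|[set~ (ord0 : 'I_K.+1)]| = K by rewrite cardsC1 card_ord.
    rewrite -[X in (X <= _)%N]cW.
    apply/subset_leq_card/subsetP => c Hc2; rewrite inE Hc2 /=.
    apply/exists_inP; exists i0 => //; rewrite (Hcl c Hc2) /a (negbTE Hi0P).
    by rewrite /dmet addn2 /= y1.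
  have lK : (l <= K)%N.
    have := leq_trans Hl (max_card N'); rewrite card_ord /n leq_pmul2r //.
  by move: (leq_trans Hc lK); rewrite ltnNge hK2.
- apply; exists [set i : 'I_n | (i < P + q)%N], ord0; split.
  + by rewrite !inE eqxx.
  + rewrite card_lt // -mulrA nk natrD; move: hq1; rewrite /x; lra.
  rewrite (@sum_lt R _ _ _ hPq (leq_addr q P) 0 1); last first.
    move=> i; rewrite /a /cl eqxx; case: ifP => _; first exact: dmet_xx.
    by rewrite /dmet addn2.
  rewrite (@sum_lt R _ _ _ hPq (leq_addr q P) 2 1); last first.
    move=> i; rewrite (distW_const _ _ _ _ _ _ _ _ HW Hcl) /a; case: ifP => _.
      by [].
    by rewrite /dmet addn2.
  rewrite addKn mul0rn add0r.
  rewrite -[2 *+ P]mulr_natr.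
  apply: final_ineq => //; move: hq1 hq2; rewrite /x //.
Qed.

Theorem theorem7 (R : realType) (eps gamma : R) :
  0 < eps -> 1 < gamma ->
  [/\ (exists (X : Type) (d : X -> X -> R) (n m k : nat)
             (a : 'I_n -> X) (cl : 'I_m -> X) (W : {set 'I_m}),
          [/\ is_metric d, (0 < n)%N /\ (0 < k)%N, outcome k W,
              UPRF d a cl k W &
              ~ prop_fair d a cl k ((3 + Num.sqrt 17) / 2 - eps) W]),
      (exists (X : Type) (d : X -> X -> R) (n m k : nat)
             (a : 'I_n -> X) (cl : 'I_m -> X) (W : {set 'I_m}),
          [/\ is_metric d, (0 < n)%N /\ (0 < k)%N, outcome k W,
              UPRF d a cl k W &
              ~ indiv_fair d a cl k (3 - eps) W]) &
      (exists (X : Type) (d : X -> X -> R) (n m k : nat)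
             (a : 'I_n -> X) (cl : 'I_m -> X) (W : {set 'I_m}),
          [/\ is_metric d, (0 < n)%N /\ (0 < k)%N, outcome k W,
              UPRF d a cl k W &
              ~ trans_core d a cl k gamma ((gamma + 1) / (gamma - 1) - eps) W])].
Proof.
move=> e0 g1; split; [exact: part1 | exact: part2 | exact: part3].
Qed.
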